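(* Let $p$ be an odd prime, $k\ge 1$, and let $f:\mathbb{F}_{p^{2k}}\to\mathbb{F}_p$ satisfy Condition A with sign $\epsilon\in\{1,-1\}$. For $0\le i\le p-1$ let $D_i=\{x\in\mathbb{F}_{p^{2k}} : f(x)=i\}$. Then (1) $|D_1|=|D_2|=\cdots=|D_{p-1}|$; (2) $|D_0|=p^{2k-1}+\epsilon(p^k-p^{k-1})$ and $|D_i|=p^{2k-1}-\epsilon p^{k-1}$ for every $1\le i\le p-1$.
   Context: Let $\zeta_p$ be a primitive complex $p$-th root of unity and $\mathrm{tr}:\mathbb{F}_{p^{n}}\to\mathbb{F}_p$ the absolute trace $\mathrm{tr}(x)=\sum_{i=0}^{n-1}x^{p^i}$. For $f:\mathbb{F}_{p^n}\to\mathbb{F}_p$ the Walsh transform is $\mathcal{W}_f(b)=\sum_{x\in\mathbb{F}_{p^n}}\zeta_p^{f(x)+\mathrm{tr}(bx)}$, $b\in\mathbb{F}_{p^n}$. Condition A: $p$ is an odd prime and $f:\mathbb{F}_{p^{2k}}\to\mathbb{F}_p$ satisfies $f(0)=0$, $f(-x)=f(x)$ for all $x$; there is an integer $l$ with $\gcd(l-1,p-1)=1$ such that $f(\alpha x)=\alpha^l f(x)$ for all $\alpha\in\mathbb{F}_p$, $x\in\mathbb{F}_{p^{2k}}$; and there exist a constant $\epsilon\in\{1,-1\}$ and a function $f^*:\mathbb{F}_{p^{2k}}\to\mathbb{F}_p$ such that $\mathcal{W}_f(b)=\epsilon p^k\zeta_p^{f^*(b)}$ for all $b\in\mathbb{F}_{p^{2k}}$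 (i.e. $f$ is a weakly regular bent function; one writes $\epsilon=(-1)^{(p-1)k/2}\mu$ with $\mu=\pm1$). *)

(* Defs.v *)
From HB Require Import structures.
From mathcomp Require Import all_boot all_order all_algebra all_field.
Unset Printing Implicit Defensive.
Import Order.TTheory GRing.Theory Num.Theory.
Local Open Scope ring_scope.

Definition absTr {F : finFieldType} (p n : nat) (x : F) : F :=
  \sum_(i < n) x ^+ (p ^ i).

(* The element of the prime field 'F_p corresponding to an element y of F
   lying in the prime subfield {0, 1, ..., p-1} of F (default 0 otherwise). *)
Definition toFp {F : finFieldType} (p : nat) (y : F) : 'F_p :=
  odflt 0 [pick i : 'F_p | ((val i)%:R : F) == y].

Definition tr {F : finFieldType} (p n : nat) (x : F) : 'F_p :=
  toFp p (absTr p n x).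

(* Walsh transform W_f(b) = sum_x zeta^(f(x) + tr(b x)), with exponents in F_p
   read as natural numbers 0..p-1 (zeta is a p-th root of unity). *)
Definition walsh {F : finFieldType} (p n : nat) (zeta : algC)
    (f : F -> 'F_p) (b : F) : algC :=
  \sum_(x : F) zeta ^+ (val (f x + tr p n (b * x))).

Definition level_set {F : finFieldType} (p : nat) (f : F -> 'F_p) (i : 'F_p)
  : {set F} := [set x | f x == i].

(* Main.v *)
Require Import Defs.
From HB Require Import structures.
From mathcomp Require Import all_boot all_order all_algebra all_field.
Import Order.TTheory GRing.Theory Num.Theory.
Local Open Scope ring_scope.
Lemma indep_nat (p : nat) (z : algC) (c : nat -> int) :
  prime p -> p.-primitive_root z ->
  \sum_(m < p) (c m)%:~R * z ^+ m = 0 -> forall m, (m < p)%N -> c m = c p.-1.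
Proof.
move=> pr_p prim Hs.
have p_gt1 := prime_gt1 pr_p.
have sz : \sum_(m < p) z ^+ m = 0.
  have := subrX1 z p; rewrite prim_expr_order // subrr => /esym/eqP.
  rewrite mulf_eq0 subr_eq0 => /orP[/eqP z1|/eqP //].
  have := eq_prim_root_expr prim 1 0; rewrite expr1 expr0 z1 eqxx.
  by rewrite !modn_small ?prime_gt0 // => /esym.
have Hs2 : \sum_(m < p.-1) (c m - c p.-1)%:~R * z ^+ m = 0.
  have e : \sum_(m < p) (c m - c p.-1)%:~R * z ^+ m = 0.
    under eq_bigr do rewrite intrB mulrBl.
    by rewrite sumrB Hs -mulr_sumr sz mulr0 subrr.
  move: e; rewrite -(prednK (prime_gt0 pr_p)) big_ord_recr /= subrr mul0r addr0.
  by [].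
pose q : {poly rat} := \poly_(m < p.-1) ((c m - c p.-1)%:~R).
have rq : root (map_poly ratr q) z.
  have -> : map_poly ratr q = \poly_(m < p.-1) ((c m - c p.-1)%:~R : algC).
    apply/polyP => i; rewrite coef_map !coef_poly.
    by case: ifP => _; [exact: ratr_int|exact: (ratr_int _ 0)].
  by rewrite /root horner_poly Hs2.
have [p0 [Dp0 _] dv] := minCpolyP z.
have q0 : q = 0.
  apply/eqP; apply/negPn/negP => nq.
  have := dvdp_leq nq (_ : p0 %| q); rewrite -dv => /(_ rq).
  have -> : size p0 = p.
    rewrite -(size_map_poly (ratr : {rmorphism rat -> algC}) p0) /=.
    have -> : map_poly ratr p0 = minCpoly z by rewrite Dp0.
    by rewrite (minCpoly_cyclotomic prim) size_cyclotomic totient_prime // prednK // prime_gt0.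
  move=> H; have := leq_trans H (size_poly _ _).
  by rewrite -{1}(prednK (prime_gt0 pr_p)) ltnn.
move=> m lmp; have : (m < p.-1)%N \/ m = p.-1.
  by move: lmp; rewrite -{1}(prednK (prime_gt0 pr_p)) ltnS leq_eqVlt => /orP[/eqP->|]; [right|left].
case=> [lm|->//]; have := congr1 (fun r : {poly rat} => r`_m) q0.
by rewrite coef_poly lm coef0 => /eqP; rewrite intr_eq0 subr_eq0 => /eqP.
Qed.

Lemma indep_Fp (p : nat) (z : algC) (d : 'F_p -> int) :
  prime p -> p.-primitive_root z ->
  \sum_(i : 'F_p) (d i)%:~R * z ^+ (val i) = 0 -> forall i j, d i = d j.
Proof.
move=> pr_p prim Hs.
have Hn := Fp_cast pr_p.
pose c (m : nat) : int := d (inZp m).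
have E : \sum_(m < (Zp_trunc (pdiv p)).+2) (c m)%:~R * z ^+ m = 0.
  by rewrite -[in RHS]Hs; apply: eq_bigr => i _; rewrite /c valZpK.
rewrite Hn in E.
have key := indep_nat _ _ _ pr_p prim E.
have H i : d i = c p.-1.
  rewrite -(key (val i)); first by rewrite /c valZpK.
  by have := ltn_ord i; rewrite [X in (_ < X)%N -> _]Hn.
by move=> i j; rewrite !H.
Qed.
Lemma even_inv (F : finFieldType) (S : {set F}) :
  (2%:R : F) != 0 -> 0 \notin S -> (forall x, x \in S -> -x \in S) -> ~~ odd #|S|.
Proof.
move=> two0; have [n] := ubnP #|S|; elim: n S => [//|n IH] S lt S0 Sneg.
case: (set_0Vmem S) => [->|[x xS]]; first by rewrite cards0.
have x0 : x != 0 by apply: contraNneq S0 => <-.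
have nx : -x != x.
  apply: contra_neq two0 => e.
  have : x * 2%:R = 0 by rewrite mulr2n mulrDr mulr1 -{1}e addNr.
  by move/eqP; rewrite mulf_eq0 (negbTE x0) /= => /eqP.
pose S' := S :\ x :\ -x.
have nxS : -x \in S :\ x by rewrite !inE nx Sneg.
have cS : #|S| = (#|S'|.+2)%N.
  by rewrite (cardsD1 x S) xS (cardsD1 (-x) (S :\ x)) nxS.
have -> : #|S| = (#|S'|.+2)%N by [].
suff: ~~ odd #|S'| by rewrite /= negbK.
  apply: IH.
  - by move: lt; rewrite cS ltnS; apply: ltnW.
  - by apply: contra S0; rewrite !inE => /and3P[_ _ ->].
  move=> y; rewrite !inE => /and3P[ynx yx yS].
  rewrite Sneg // andbT; apply/andP; split.
  - by apply: contra_neq yx => /oppr_inj.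
  - by apply: contra_neq ynx => <-; rewrite opprK.
Qed.

Theorem lemma1 (p k : nat) (F : finFieldType) (zeta : algC)
  (f fstar : F -> 'F_p) (l : int) (eps : int) :
  prime p -> odd p -> (1 <= k)%N ->
  #|F| = (p ^ (2 * k))%N ->
  p.-primitive_root zeta ->
  (* Condition A *)
  f 0 = 0 ->
  (forall x, f (- x) = f x) ->
  coprimez (l - 1) (p%:Z - 1) ->
  (forall (a : 'F_p) (x : F), f ((val a)%:R * x) = a ^ l * f x) ->
  (eps = 1 \/ eps = -1) ->
  (forall b : F, walsh p (2 * k) zeta f b
                 = eps%:~R * (p%:R) ^+ k * zeta ^+ (val (fstar b))) ->
  (* conclusions *)
  (forall i j : 'F_p, i != 0 -> j != 0 ->
     #|level_set p f i| = #|level_set p f j|) /\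
  (#|level_set p f 0|%:Z = (p ^ (2 * k - 1))%:Z + eps * ((p ^ k)%:Z - (p ^ (k - 1))%:Z)
   /\ forall i : 'F_p, i != 0 ->
     #|level_set p f i|%:Z = (p ^ (2 * k - 1))%:Z - eps * (p ^ (k - 1))%:Z).
Proof.
move=> pr_p odd_p k1 cardF prim f0 fneg _ _ _ HW.
pose N i := #|level_set p f i|.
have p3 : (2 < p)%N.
  rewrite ltn_neqAle prime_gt1 // andbT.
  by apply: contraTneq odd_p => <-.
have two0 : (2%:R : F) != 0.
  rewrite -(dvdn_pcharf (card_finPcharP cardF pr_p)).
  by apply/negP => /(dvdn_leq (isT : (0 < 2)%N)); rewrite leqNgt p3.
have evenN i : i != 0 -> ~~ odd (N i).
  move=> i0; apply: even_inv => //.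
    by rewrite inE f0 eq_sym.
  by move=> x; rewrite !inE fneg.
have oddN0 : odd (N 0).
  have H0 : (0:F) \in level_set p f 0 by rewrite inE f0.
  rewrite /N (cardsD1 0) H0 add1n /=.
  apply: even_inv => //; first by rewrite !inE eqxx.
  by move=> x; rewrite !inE fneg oppr_eq0.
set t := tr p (2 * k) (0 : F).
set j := fstar 0.
have W : \sum_(i : 'F_p) (N i)%:R * zeta ^+ val (i + t)
         = eps%:~R * p%:R ^+ k * zeta ^+ val j.
  rewrite -HW /walsh (partition_big f xpredT) //; apply: eq_bigr => i _.
  transitivity (\sum_(x | f x == i) zeta ^+ val (i + t)).
    by rewrite sumr_const mulr_natl; congr (_ *+ _); apply: eq_card => x; rewrite inE.
  by apply: eq_bigr => x /eqP <-; rewrite mul0r.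
pose d (i : 'F_p) : int := (N (i - t))%:Z - eps * (p ^ k)%:Z * (i == j)%:Z.
have Hd : \sum_(i : 'F_p) (d i)%:~R * zeta ^+ (val i) = 0.
  under eq_bigr do rewrite intrB mulrBl.
  rewrite sumrB; apply/eqP; rewrite subr_eq0; apply/eqP.
  rewrite (reindex_inj (addIr t)) /=.
  transitivity (\sum_(i : 'F_p) (N i)%:R * zeta ^+ val (i + t)).
    by apply: eq_bigr => i _; rewrite addrK -pmulrn.
  rewrite W (bigD1 j) //= big1 => [|i /negbTE ->]; last by rewrite mulr0 mul0r.
  by rewrite eqxx mulr1 addr0 !intrM -!pmulrn natrX.
have dc := indep_Fp _ _ _ pr_p prim Hd.
set C := d 0.
have HN i : (N i)%:Z = C + eps * (p ^ k)%:Z * (i + t == j)%:Z.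
  by rewrite /C -(dc (i + t)) /d addrK subrK.
have H1 : (1 : 'F_p) != -1.
  apply/negP => /eqP e.
  have : (2%:R : 'F_p) == 0 by rewrite mulr2n {2}e subrr.
  rewrite -(dvdn_pcharf (pchar_Fp pr_p)).
  by move/(dvdn_leq (isT : (0 < 2)%N)); rewrite leqNgt p3.
have tj : t == j.
  apply/negPn/negP => ntj.
  have N0C : (N 0)%:Z = C by rewrite HN add0r (negbTE ntj) mulr0 addr0.
  have [i1 [i1n0 i1C]] : exists i1 : 'F_p, i1 != 0 /\ (N i1)%:Z = C.
    case: (boolP (1 + t == j)) => e.
    - exists (-1); split; first by rewrite oppr_eq0 oner_eq0.
      rewrite HN; suff -> : (-1 + t == j) = false by rewrite mulr0 addr0.
      apply/negP => /eqP e2; move/eqP: e; rewrite -e2 => /addIr e3.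
      by move/eqP: e3; rewrite (negbTE H1).
    - by exists 1; split; [rewrite oner_eq0 | rewrite HN (negbTE e) mulr0 addr0].
  have e : N i1 = N 0 by apply/eqP; rewrite -eqz_nat i1C N0C.
  by have := evenN i1 i1n0; rewrite e oddN0.
have HN' i : (N i)%:Z = C + eps * (p ^ k)%:Z * (i == 0)%:Z.
  rewrite HN (eqP tj).
  by have -> : (i + j == j) = (i == 0) by rewrite -{2}(add0r j) (inj_eq (addIr j)).
have HNz i : i != 0 -> (N i)%:Z = C by move=> i0; rewrite HN' (negbTE i0) mulr0 addr0.
have N0 : (N 0)%:Z = C + eps * (p ^ k)%:Z by rewrite HN' eqxx mulr1.
have Hs : (\sum_(i : 'F_p) N i)%N = #|F|.
  rewrite -sum1_card (partition_big f xpredT) //; apply: eq_bigr => i _.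
  by rewrite sum1_card; apply: eq_card => x; rewrite inE.
have Hsz : \sum_(i : 'F_p) (N i)%:Z = (p ^ (2 * k))%:Z.
  rewrite -cardF -Hs -[RHS]natz natr_sum; apply: eq_bigr => i _; by rewrite natz.
have Hrest : \sum_(i | i != 0) (N i)%:Z = C *+ p.-1.
  rewrite (eq_bigr (fun=> C)); last by move=> i; apply: HNz.
  by rewrite sumr_const cardC1 card_Fp.
rewrite (bigD1 0) //= Hrest N0 addrAC -mulrS prednK ?prime_gt0 // -mulr_natr natz in Hsz.
have ek : (p ^ k)%:Z = (p ^ (k - 1))%:Z * p%:Z by rewrite -PoszM -expnSr subn1 prednK.
have e2k : (p ^ (2 * k))%:Z = (p ^ (2 * k - 1))%:Z * p%:Z.
  by rewrite -PoszM -expnSr subn1 prednK // muln_gt0 k1.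
have HC' : C * p%:Z = ((p ^ (2 * k - 1))%:Z - eps * (p ^ (k - 1))%:Z) * p%:Z.
  by rewrite [RHS]mulrBl -[in RHS](mulrA eps) -ek -e2k -Hsz addrK.
have HC := mulIf _ HC'.
rewrite HC ?eqz_nat -?lt0n ?prime_gt0 // in N0 HNz.
split; first by move=> i i' i0 i'0; apply/eqP; rewrite -eqz_nat (HNz i i0) (HNz i' i'0).
split; last exact: HNz.
rewrite [X in X = _]N0.
by rewrite mulrBr addrA addrAC.
Qed.
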